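(* Let $k\ge 2$ and let $\mathbf{x}$ be a random vector in $\mathbb{R}^k$ (asset returns) with mean $\boldsymbol{\mu}=E(\mathbf{x})$ and covariance matrix $\boldsymbol{\Sigma}=\mathrm{Var}(\mathbf{x})$, symmetric and positive definite. Let $n\ge 2$, let $\alpha_1,\dots,\alpha_n>0$ be pairwise distinct risk aversions, $\beta_1,\dots,\beta_n>0$ with $\sum_{i=1}^n\beta_i=1$ relative wealth proportions, and $\phi_1,\dots,\phi_n>0$ mimicking coefficients. For a $k\times n$ matrix $\mathbf{W}=(\mathbf{w}_1,\dots,\mathbf{w}_n)$ of portfolio weight vectors (with $\mathbf{w}_i'\mathbf{1}=1$, where $\mathbf{1}\in\mathbb{R}^k$ is the vector of ones) put $\mathbf{w}_{\mathbf{f}}=\mathbf{W}\boldsymbol{\beta}=\sum_{i=1}^n\beta_i\mathbf{w}_i$, $\boldsymbol\beta=(\beta_1,\dots,\beta_n)'$, and $$EU_i^*=\mathbf{w}_i'\boldsymbol{\mu}-\frac{\alpha_i}{2}\mathbf{w}_i'\boldsymbol{\Sigma}\mathbf{w}_i-\frac{\phi_i}{2}(\mathbf{w}_i-\mathbf{w}_{\mathbf{f}})'\boldsymbol{\Sigma}(\mathbf{w}_i-\mathbf{w}_{\mathbf{f}}),\qquad EU^*=\sum_{i=1}^n\beta_i EU_i^*.$$ Then $$EU^*=E(\boldsymbol{\beta}'\mathbf{W}'\mathbf{x})-\frac12 E\big[(\mathbf{x}-E(\mathbf{x}))'\mathbf{W}\mathbf{A}\mathbf{W}'(\mathbf{x}-E(\mathbf{x}))\big]=\boldsymbol{\beta}'\mathbf{W}'\boldsymbol{\mu}-\frac12\operatorname{tr}(\mathbf{A}\mathbf{W}'\boldsymbol{\Sigma}\mathbf{W}),$$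 where the $n\times n$ matrix $\mathbf{A}$ is $$\mathbf{A}=(\mathbf{A}_0+\boldsymbol{\Phi})\mathbf{B}+(\bar\phi\mathbf{I}_n-2\boldsymbol{\Phi})\boldsymbol{\beta}\boldsymbol{\beta}',\qquad \bar\phi=\boldsymbol\beta'\boldsymbol\phi=\sum_{i=1}^n\beta_i\phi_i,$$ with $\mathbf{A}_0=\mathrm{diag}(\alpha_1,\dots,\alpha_n)$, $\boldsymbol{\Phi}=\mathrm{diag}(\phi_1,\dots,\phi_n)$, $\mathbf{B}=\mathrm{diag}(\beta_1,\dots,\beta_n)$, $\boldsymbol\phi=(\phi_1,\dots,\phi_n)'$, and $\mathbf{I}_n$ the $n\times n$ identity.
   Context: $EU_i^*$ is the mean-variance objective of investor $i$ penalized by the $\boldsymbol\Sigma$-weighted squared distance of his portfolio from the aggregate (wealth-weighted) portfolio $\mathbf{w}_{\mathbf f}$; $EU^*$ is the aggregate objective of a mutual fund pooling the investors. Short sales are allowed (weights may be negative). *)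

(* Defs.v *)
From HB Require Import structures.
From mathcomp Require Import all_boot all_order all_algebra.
From mathcomp Require Import all_classical all_reals all_analysis.
Set Implicit Arguments. Unset Strict Implicit. Unset Printing Implicit Defensive.
Import Order.TTheory GRing.Theory Num.Theory.
Local Open Scope ring_scope.

Section defs.
Context {d : measure_display} {T : measurableType d} {R : realType}.

Definition rvec {k : nat} (x : 'I_k -> T -> R) (w : T) : 'cV[R]_k :=
  \col_j x j w.

Definition meanvec (P : probability T R) {k : nat} (x : 'I_k -> T -> R)
  : 'cV[R]_k := \col_j fine ('E_P[x j])%E.

Definition covmx (P : probability T R) {k : nat} (x : 'I_k -> T -> R)
  : 'M[R]_k := \matrix_(i, j) fine (covariance P (x i) (x j)).
End defs.

Definition posdef {R : realType} {k : nat} (S : 'M[R]_k) : Prop :=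
  S^T = S /\ forall v : 'cV[R]_k, v != 0 -> 0 < (v^T *m S *m v) 0 0.

Definition cvec {R : realType} {n : nat} (a : 'I_n -> R) : 'cV[R]_n :=
  \col_i a i.

Definition diagm {R : realType} {n : nat} (a : 'I_n -> R) : 'M[R]_n :=
  diag_mx (cvec a)^T.

Definition wf {R : realType} {k n : nat} (W : 'M[R]_(k, n)) (beta : 'I_n -> R)
  : 'cV[R]_k := W *m cvec beta.

Definition EUi {R : realType} {k n : nat} (mu : 'cV[R]_k) (S : 'M[R]_k)
  (alpha beta phi : 'I_n -> R) (W : 'M[R]_(k, n)) (i : 'I_n) : R :=
  let wi := col i W in
  let dv := wi - wf W beta in
  (wi^T *m mu) 0 0 - alpha i / 2 * (wi^T *m S *m wi) 0 0
  - phi i / 2 * (dv^T *m S *m dv) 0 0.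

Definition EU {R : realType} {k n : nat} (mu : 'cV[R]_k) (S : 'M[R]_k)
  (alpha beta phi : 'I_n -> R) (W : 'M[R]_(k, n)) : R :=
  \sum_(i < n) beta i * EUi mu S alpha beta phi W i.

Definition Amat {R : realType} {n : nat} (alpha beta phi : 'I_n -> R)
  : 'M[R]_n :=
  let phibar := \sum_(i < n) beta i * phi i in
  (diagm alpha + diagm phi) *m diagm beta
  + (phibar%:M - 2%:R *: diagm phi) *m (cvec beta *m (cvec beta)^T).

(* Main.v *)
Require Import Defs.
From HB Require Import structures.
From mathcomp Require Import all_boot all_order all_algebra.
From mathcomp Require Import all_classical all_reals all_analysis.
Import Order.TTheory GRing.Theory Num.Theory.
From mathcomp Require Import ring lra.
Local Open Scope ring_scope.

Lemma subE (R : realType) (A B : 'M[R]_1) : (A - B) 0 0 = A 0 0 - B 0 0.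
Proof. by rewrite !mxE. Qed.

Lemma quadB (R : realType) k (S : 'M[R]_k) (u v : 'cV[R]_k) :
  ((u - v)^T *m S *m (u - v)) 0 0 = (u^T *m S *m u) 0 0 - (u^T *m S *m v) 0 0
    - (v^T *m S *m u) 0 0 + (v^T *m S *m v) 0 0.
Proof.
rewrite [(u - v)^T]linearB /= !mulmxBl !mulmxBr !subE; ring.
Qed.

Lemma rowcol (R : realType) m p q (X : 'M[R]_(m,p)) (Y : 'M[R]_(p,q)) i j :
  (row i X *m col j Y) 0 0 = (X *m Y) i j.
Proof. by rewrite !mxE; apply: eq_bigr => l _; rewrite !mxE. Qed.

Lemma mulcol (R : realType) m p q (X : 'M[R]_(m,p)) (Y : 'M[R]_(p,q)) a i :
  (X *m col i Y) a 0 = (X *m Y) a i.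
Proof. by rewrite !mxE; apply: eq_bigr => l _; rewrite !mxE. Qed.

Lemma part2 (R : realType) (k n : nat) (mu : 'cV[R]_k) (S : 'M[R]_k)
  (alpha beta phi : 'I_n -> R) (W : 'M[R]_(k, n)) :
  S^T = S ->
  EU mu S alpha beta phi W =
     ((cvec beta)^T *m W^T *m mu) 0 0 - 2^-1 * \tr (Amat alpha beta phi *m W^T *m S *m W).
Proof.
move=> St.
set M := W^T *m S *m W.
set b := cvec beta.
have Mt : M^T = M by rewrite /M !trmx_mul trmxK St mulmxA.
set c := fun i => (b^T *m M) 0 i.
set q := (b^T *m M *m b) 0 0.
have rc : forall i, (M *m b) i 0 = c i.
  have Mij : forall i j, M i j = M j i by move=> i j; rewrite -{1}Mt mxE.
  move=> i; rewrite /c !mxE; apply: eq_bigr => j _; by rewrite [b^T _ _]mxE mulrC Mij.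
have EUiE : forall i, EUi mu S alpha beta phi W i =
   (W^T *m mu) i 0 - alpha i / 2 * M i i - phi i / 2 * (M i i - 2 * c i + q).
  move=> i; rewrite /EUi /wf -/b.
  have wT : (col i W)^T = row i W^T by rewrite tr_col.
  rewrite wT -row_mul mxE.
  have -> : (row i W^T *m S *m col i W) 0 0 = M i i by rewrite -row_mul rowcol.
  rewrite quadB.
  have -> : ((col i W)^T *m S *m (W *m b)) 0 0 = (M *m b) i 0.
    by rewrite wT -row_mul -row_mul mxE /M !mulmxA.
  have -> : ((W *m b)^T *m S *m col i W) 0 0 = c i.
    by rewrite mulcol /c /M trmx_mul !mulmxA.
  have -> : ((W *m b)^T *m S *m (W *m b)) 0 0 = q.
    by rewrite /q /M trmx_mul !mulmxA.
  rewrite wT -row_mul rowcol -/M rc; ring.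
set phibar := \sum_(i < n) beta i * phi i.
have AME : forall i, (Amat alpha beta phi *m M) i i =
  (alpha i + phi i) * beta i * M i i + (phibar - 2 * phi i) * beta i * c i.
  clearbody M.
  move=> i; rewrite /Amat -/phibar -/b mulmxDl -!mulmxA mulmxDl /diagm !mul_diag_mx.
  rewrite mulmxDl mulNmx -scalemxAl mul_scalar_mx mul_diag_mx.
  rewrite !mul_diag_mx /c /b /cvec !mxE big_ord1 !mxE.
  under eq_bigr do rewrite !mxE.
  ring.
have Hq : q = \sum_i beta i * c i.
  by rewrite /q mxE; apply: eq_bigr => i _; rewrite mulrC /c; congr (_ * _); rewrite /b /cvec mxE.
have -> : Amat alpha beta phi *m W^T *m S *m W = Amat alpha beta phi *m M.
  by rewrite /M !mulmxA.
have -> : (b^T *m W^T *m mu) 0 0 = \sum_i beta i * (W^T *m mu) i 0.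
  by rewrite -mulmxA mxE; apply: eq_bigr => i _; rewrite /b /cvec !mxE.
rewrite /mxtrace (eq_bigr _ (fun i _ => AME i)).

rewrite /EU.
rewrite (eq_bigr _ (fun i _ => congr1 (fun t => beta i * t) (EUiE i))).
pose F i := beta i * (W^T *m mu) i 0 - 2^-1 * ((alpha i + phi i) * beta i * M i i - 2 * phi i * beta i * c i).
transitivity (\sum_i F i - 2^-1 * (phibar * q)).
  rewrite /phibar mulr_suml mulr_sumr -sumrB; apply: eq_bigr => i _; rewrite /F; ring.
rewrite Hq mulr_sumr mulr_sumr -sumrB mulr_sumr -sumrB.
apply: eq_bigr => i _; rewrite /F; ring.
Qed.


Section expect.
Context (d : measure_display) (T : measurableType d) (R : realType)
  (P : probability T R).
Local Open Scope ereal_scope.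

Lemma E_sum m (F : 'I_m -> T -> R) : (forall i, F i \in Lfun P 1) ->
  'E_P[fun w => (\sum_(i < m) F i w)%R] = \sum_(i < m) 'E_P[F i].
Proof.
move=> HF.
have -> : (fun w => (\sum_(i < m) F i w)%R) = (\sum_(f <- map F (index_enum 'I_m)) f)%R.
  by rewrite big_map fct_sumE.
rewrite expectation_sum ?big_map// => X /mapP [i _ ->]; exact: HF.
Qed.

Lemma E_scale c (X : T -> R) : X \in Lfun P 1 ->
  'E_P[fun w => (c * X w)%R] = c%:E * 'E_P[X].
Proof.
move=> HX; rewrite -expectationZl//; congr expectation.
by apply/funext => w /=; rewrite mulrC.
Qed.

Lemma Lfun_scale1 c (X : T -> R) : X \in Lfun P 1 ->
  (fun w => (c * X w)%R) \in Lfun P 1.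
Proof.
move=> HX; have -> : (fun w => (c * X w)%R) = (c \o* X)%R.
  by apply/funext => w /=; rewrite mulrC.
exact: (@Lfun_scale _ _ _ P X c 1%R (lexx _) HX).
Qed.

Lemma Lfun_sum1 m (F : 'I_m -> T -> R) : (forall i, F i \in Lfun P 1) ->
  (fun w => (\sum_(i < m) F i w)%R) \in Lfun P 1.
Proof.
move=> HF; rewrite -fct_sumE.
have p1 : (1 <= (1 : \bar R))%E by [].
apply: (@rpred_sum _ (hoelder_Lfun__canonical__Algebra_ZmodClosed P p1)).
move=> i _; exact: HF.
Qed.

End expect.

Theorem proposition1 (d : measure_display) (T : measurableType d)
  (R : realType) (P : probability T R) (k n : nat)
  (x : 'I_k -> T -> R)
  (alpha beta phi : 'I_n -> R) (W : 'M[R]_(k, n)) :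
  (2 <= k)%N -> (2 <= n)%N ->
  (forall j, x j \in Lfun P 2%:E) ->
  posdef (covmx P x) ->
  (forall i, 0 < alpha i) -> injective alpha ->
  (forall i, 0 < beta i) -> \sum_(i < n) beta i = 1 ->
  (forall i, 0 < phi i) ->
  (forall i, \sum_(j < k) W j i = 1) ->
  let mu := meanvec P x in
  let S := covmx P x in
  let A := Amat alpha beta phi in
  let b := cvec beta in
  ((EU mu S alpha beta phi W)%:E =
     ('E_P[fun w => (b^T *m W^T *m rvec x w) ord0 ord0]
      - (2^-1)%:E * 'E_P[fun w =>
          ((rvec x w - mu)^T *m W *m A *m W^T *m (rvec x w - mu)) ord0 ord0])%E)
  /\
  EU mu S alpha beta phi W =
     (b^T *m W^T *m mu) 0 0 - 2^-1 * \tr (A *m W^T *m S *m W).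
Proof.
move=> k2 n2 Hx [St _] _ _ _ _ _ _ mu S A b.
have P2 := @part2 _ _ _ mu S alpha beta phi W St.
have Pfin : P setT \is a fin_num := fin_num_measure P _ measurableT.
have Hx1 : forall j, x j \in Lfun P 1 := fun j => Lfun_subset12 Pfin (Hx j).
have Emu : forall j, ('E_P[x j] = (mu j 0)%:E)%E.
  by move=> j; rewrite /mu /meanvec mxE fineK// expectation_fin_num.
split; last exact: P2.
rewrite P2.
have -> : ('E_P[fun w => (b^T *m W^T *m rvec x w) ord0 ord0] =
    ((b^T *m W^T *m mu) 0 0)%:E)%E.
  set v := b^T *m W^T.
  have -> : (fun w => (v *m rvec x w) ord0 ord0) =
       (fun w => \sum_(j < k) (fun j w => v 0 j * x j w) j w).
    apply/funext => w; rewrite mxE; apply: eq_bigr => j _; congr (_ * _); by rewrite /rvec mxE.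
  rewrite E_sum; last by move=> j; exact: Lfun_scale1.
  rewrite mxE -sumEFin; apply: eq_bigr => j _.
  by rewrite E_scale// Emu.
set N := W *m A *m W^T.
have -> : ('E_P[fun w =>
          ((rvec x w - mu)^T *m W *m A *m W^T *m (rvec x w - mu)) ord0 ord0] =
    (\sum_(l < k) \sum_(j < k) N j l * S j l)%:E)%E.
  set y := fun j => (x j \- cst (mu j 0))%R.
  have y2 : forall j, y j \in Lfun P 2%:E.
    move=> j; rewrite /y.
    have -> : (x j \- cst (mu j 0))%R = (x j - cst (mu j 0))%R by apply/funext.
    apply: rpredB => [|p1|p1]; first by rewrite lee_fin ler1n.
    - exact: Hx.
    - exact: Lfun_cst.
  have yy1 : forall j l, (y j \* y l)%R \in Lfun P 1.
    by move=> j l; exact: Lfun2_mul_Lfun1.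
  have -> : (fun w => ((rvec x w - mu)^T *m W *m A *m W^T *m (rvec x w - mu)) ord0 ord0) =
     (fun w => \sum_(l < k) (fun l w => \sum_(j < k) (fun j w => N j l * (y j w * y l w)) j w) l w).
    apply/funext => w.
    have -> : (rvec x w - mu)^T *m W *m A *m W^T *m (rvec x w - mu) =
      (rvec x w - mu)^T *m N *m (rvec x w - mu) by rewrite /N !mulmxA.
    rewrite mxE.
    apply: eq_bigr => l _; rewrite mxE big_distrl /=; apply: eq_bigr => j _.
    rewrite !mxE /y /mu /meanvec /= !mxE; ring.
  rewrite E_sum; last first.
    by move=> l; apply: Lfun_sum1 => j; apply: Lfun_scale1; exact: (yy1 j l).
  rewrite -sumEFin; apply: eq_bigr => l _.
  rewrite E_sum; last by move=> j; apply: Lfun_scale1; exact: (yy1 j l).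
  rewrite -sumEFin; apply: eq_bigr => j _.
  rewrite E_scale; last exact: (yy1 j l).
  have -> : ('E_P[(y j \* y l)%R] = covariance P (x j) (x l))%E.
    rewrite [in RHS]unlock /y /mu /meanvec !mxE; congr expectation.
  rewrite /S /covmx [X in (_ * X)%:E]mxE EFinM fineK//.
  by apply: covariance_fin_num => //; apply: Lfun2_mul_Lfun1.
have -> : \tr (A *m W^T *m S *m W) = \sum_(l < k) \sum_(j < k) N j l * S j l.
  rewrite mxtrace_mulC !mulmxA -/N /mxtrace exchange_big /=.
  apply: eq_bigr => l _; rewrite mxE; apply: eq_bigr => j _.
  by congr (_ * _); rewrite /S -[in LHS]St mxE.
by rewrite EFinB EFinM.
Qed.
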